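(* Let $\varphi(x)=P(x)/Q(x)$ be a rational function, regular at $x=0$, whose Taylor series at $x=0$ is symplectic. Then there exists a rational function $\rho(y)$ such that $\varphi(x)=\rho\big(x^2/(1-x)\big)$.
   Context: A formal power series $\varphi(x)=\sum_{i\ge0}\gamma_i x^i\in\mathbb{C}[[x]]$ is called symplectic if for every $m\ge1$ one has $\sum_{k=0}^{m-1}(-1)^k\binom{m-1}{k}\gamma_{m+k}=0$. *)

(* Defs.v *)
From HB Require Import structures.
From mathcomp Require Import all_boot all_order all_algebra.
From mathcomp Require Import reals complex.
Set Implicit Arguments. Unset Strict Implicit. Unset Printing Implicit Defensive.
Import Order.TTheory GRing.Theory Num.Theory.
Local Open Scope ring_scope.

Notation "x %:F" := (@FracField.tofrac _ x) : ring_scope.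

(* gamma is the Taylor series at 0 of P/Q (with Q(0) <> 0), i.e.
   Q * gamma = P as formal power series. *)
Definition is_taylor_series (F : nzRingType) (P Q : {poly F}) (gamma : nat -> F) :=
  forall n : nat, \sum_(k < n.+1) Q`_k * gamma (n - k)%N = P`_n.

Definition symplectic (F : nzRingType) (gamma : nat -> F) :=
  forall m : nat, (1 <= m)%N ->
    \sum_(k < m) (-1) ^+ k * ('C(m.-1, k))%:R * gamma (m + k)%N = 0.

Definition ysub (F : fieldType) : {fraction {poly F}} :=
  ('X ^+ 2)%:F / (1 - 'X)%:F.

Definition eval_at_y (F : fieldType) (A : {poly F}) : {fraction {poly F}} :=
  (map_poly (fun c : F => (c%:P)%:F) A).[ysub F].

(* Main.v *)
Require Import Defs.
From HB Require Import structures.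
From mathcomp Require Import all_boot all_order all_algebra.
From mathcomp Require Import reals complex.
From mathcomp Require Import ring zify.
Import GRing.Theory Num.Theory.
Local Open Scope ring_scope.
Section S. Variable F : numFieldType.
Implicit Types (f g h : {poly F}).
Local Notation KF := {fraction {poly F}}.
Definition iota : {rmorphism F -> KF} := (@FracField.tofrac {poly F} \o polyC)%FUN.
Definition evK (z : KF) (f : {poly F}) : KF := (map_poly (fun c : F => (c%:P)%:F) f).[z].
Lemma evKE z f : evK z f = (map_poly iota f).[z].
Proof. by []. Qed.
Lemma evKM z f g : evK z (f * g) = evK z f * evK z g.
Proof. by rewrite !evKE rmorphM hornerM. Qed.
Lemma evKD z f g : evK z (f + g) = evK z f + evK z g.
Proof. by rewrite !evKE rmorphD hornerD. Qed.
Lemma evKB z f g : evK z (f - g) = evK z f - evK z g.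
Proof. by rewrite !evKE rmorphB hornerD hornerN. Qed.
Lemma evKX z : evK z 'X = z.
Proof. by rewrite evKE map_polyX hornerX. Qed.
Lemma evKC z c : evK z c%:P = (c%:P)%:F.
Proof. by rewrite evKE map_polyC hornerC. Qed.
Lemma evK1 z : evK z 1 = 1.
Proof. by rewrite evKE rmorph1 hornerC. Qed.
Lemma evKXn z f n : evK z (f ^+ n) = evK z f ^+ n.
Proof. by rewrite !evKE rmorphXn horner_exp. Qed.
Lemma evKZ z c f : evK z (c *: f) = (c%:P)%:F * evK z f.
Proof. by rewrite -mul_polyC evKM evKC. Qed.

Definition fX : KF := ('X : {poly F})%:F.
Definition s : KF := fX / (fX - 1).
Lemma fXm1_neq0 : fX - 1 != 0.
Proof.
rewrite /fX -tofrac1 -tofracB tofrac_eq0 subr_eq0.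
by apply/negP => /eqP /(congr1 (fun p : {poly F} => size p)); rewrite size_polyX size_poly1.
Qed.
Lemma fX_neq0 : fX != 0.
Proof. by rewrite /fX tofrac_eq0 polyX_eq0. Qed.

Definition hat (a : nat) (f : {poly F}) : {poly F} :=
  \sum_(j < a.+1) f`_j *: ('X^j * ('X - 1) ^+ (a - j)).

Lemma hat_frac a (f : {poly F}) : (size f <= a.+1)%N ->
  (hat a f)%:F = (fX - 1) ^+ a * evK s f.
Proof.
move=> hs; rewrite evKE (horner_coef_wide _ (n:=a.+1)); last by rewrite size_map_poly.
rewrite /hat rmorph_sum mulr_sumr; apply: eq_bigr => j _.
rewrite coef_map /= -mul_polyC !rmorphM /= !rmorphXn /= rmorphB /= tofrac1 -/fX.
have hj : (j <= a)%N by rewrite -ltnS.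
have -> : (fX - 1) ^+ a = (fX-1)^+j * (fX-1)^+(a-j) by rewrite -exprD subnKC.
rewrite /s expr_div_n [RHS]mulrC -!mulrA mulKf //.
by rewrite expf_neq0 // fXm1_neq0.
Qed.
Lemma size_Xm1 : size ('X - 1 : {poly F}) = 2.
Proof. by rewrite -polyC1 size_XsubC. Qed.

Lemma size_hat a f : (size (hat a f) <= a.+1)%N.
Proof.
rewrite /hat; elim/big_ind: _ => //.
- by rewrite size_poly0.
- by move=> p q hp hq; apply: leq_trans (size_polyD _ _) _; rewrite geq_max hp hq.
move=> j _; apply: leq_trans (size_scale_leq _ _) _.
apply: leq_trans (size_polyMleq _ _) _; rewrite size_polyXn.
have := size_poly_exp_leq ('X - 1 : {poly F}) (a - j); rewrite size_Xm1 /= mul1n => h.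
have hj : (j <= a)%N by rewrite -ltnS.
move: h; set q := size _ => hq.
by apply: leq_trans (leq_add (leqnn j) hq) _; rewrite addnS subnKC.
Qed.

Lemma tofrac_inj (p q : {poly F}) : p%:F = q%:F -> p = q.
Proof. by move/eqP; rewrite tofrac_eq => /eqP. Qed.

Lemma hatM a b f g : (size f <= a.+1)%N -> (size g <= b.+1)%N ->
  hat (a + b) (f * g) = hat a f * hat b g.
Proof.
move=> hf hg; apply: tofrac_inj; rewrite rmorphM /= !hat_frac // ?evKM ?exprD.
  by rewrite mulrACA.
apply: leq_trans (size_polyMleq _ _) _.
move: hf hg; lia.
Qed.

Lemma hat_ext a b f : (size f <= a.+1)%N -> hat (a + b) f = ('X - 1) ^+ b * hat a f.
Proof.
move=> hf; apply: tofrac_inj; rewrite rmorphM /= !hat_frac //; last first.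
  by apply: leq_trans hf _; rewrite ltnS leq_addr.
by rewrite rmorphXn rmorphB /= tofrac1 -/fX exprD mulrA [_ ^+ b * _]mulrC.
Qed.

Lemma evK_fX f : evK fX f = f%:F.
Proof.
rewrite evKE horner_coef size_map_poly.
have -> : f%:F = (\sum_(i < size f) f`_i *: 'X^i)%:F by rewrite -poly_def coefK.
rewrite rmorph_sum; apply: eq_bigr => i _.
by rewrite coef_map -mul_polyC rmorphM rmorphXn.
Qed.

Lemma sm1 : s - 1 = (fX - 1)^-1.
Proof.
have h := fXm1_neq0.
have -> : s - 1 = (fX - (fX-1)) / (fX - 1) by rewrite mulrBl divff.
by rewrite opprB addrC subrK mul1r.
Qed.

Lemma evK_hat a f : (size f <= a.+1)%N -> evK s (hat a f) = (fX - 1) ^- a * f%:F.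
Proof.
move=> hf; rewrite -evK_fX [evK fX f]evKE (horner_coef_wide _ (n:=a.+1)); last by rewrite size_map_poly.
rewrite mulr_sumr /hat.
rewrite (big_morph (evK s) (evKD s) (_ : evK s 0 = 0)); last by rewrite evKE rmorph0 horner0.
apply: eq_bigr => j _.
rewrite evKZ evKM evKXn evKX evKXn evKB evKX evK1 sm1 coef_map /=.
have hj : (j <= a)%N by rewrite -ltnS.
have -> : (fX - 1) ^+ a = (fX-1)^+j * (fX-1)^+(a-j) by rewrite -exprD subnKC.
rewrite /s expr_div_n exprVn invfM.
by rewrite [RHS]mulrC -!mulrA.
Qed.

Lemma hat_invol a f : (size f <= a.+1)%N -> hat a (hat a f) = f.
Proof.
move=> hf; apply: tofrac_inj; rewrite hat_frac ?size_hat // evK_hat //.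
by rewrite mulVKf // expf_neq0 // fXm1_neq0.
Qed.

Lemma hatB a f g : hat a (f - g) = hat a f - hat a g.
Proof.
rewrite /hat -sumrB; apply: eq_bigr => j _; by rewrite coefB scalerBl.
Qed.

Lemma hatZ a c f : hat a (c *: f) = c *: hat a f.
Proof.
rewrite /hat scaler_sumr; apply: eq_bigr => j _; by rewrite coefZ scalerA.
Qed.

Lemma coef0_Xm1 k : (('X - 1 : {poly F}) ^+ k)`_0 = (-1) ^+ k.
Proof. by rewrite -horner_coef0 horner_exp hornerD hornerN hornerX hornerC add0r. Qed.

Lemma coef0_1mX k : ((1 - 'X : {poly F}) ^+ k)`_0 = 1.
Proof. by rewrite -horner_coef0 horner_exp hornerD hornerN hornerX hornerC subr0 expr1n. Qed.

Lemma coef_hat_low a f n : (n <= a)%N -> (forall j, (j < n)%N -> f`_j = 0) ->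
  (hat a f)`_n = f`_n * (-1) ^+ (a - n).
Proof.
move=> hn hz; rewrite /hat coef_sum.
have hn' : (n < a.+1)%N by rewrite ltnS.
rewrite (bigD1 (Ordinal hn')) //= big1 ?addr0.
  by rewrite coefZ coefXnM ltnn subnn coef0_Xm1.
move=> j hj; rewrite coefZ coefXnM.
case: ltnP => h1; first by rewrite mulr0.
have : (j < n)%N.
  rewrite ltn_neqAle h1 andbT; apply: contra hj => /eqP hj'.
  by apply/eqP; apply: val_inj.
by move/hz => ->; rewrite mul0r.
Qed.

Lemma opp_self (x : F) : x = - x -> x = 0.
Proof.
move=> h; have : x *+ 2 = 0 by rewrite mulr2n {2}h subrr.
by move/eqP; rewrite mulrn_eq0 /= => /eqP.
Qed.

Lemma hat_1mX M : hat (M + M) ((1 - 'X) ^+ M) = (1 - 'X) ^+ M.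
Proof.
have hs : (size ((1 - 'X : {poly F}) ^+ M) <= (M + M).+1)%N.
  apply: leq_trans (size_poly_exp_leq _ _) _.
  have -> : size (1 - 'X : {poly F}) = 2 by rewrite -opprB size_polyN size_Xm1.
  by rewrite mul1n ltnS leq_addr.
apply: tofrac_inj; rewrite hat_frac // evKXn evKB evK1 evKX.
have -> : 1 - s = - (s - 1) by rewrite opprB.
rewrite sm1 exprD -mulrA -exprMn mulrN mulfV ?fXm1_neq0 //.
rewrite rmorphXn rmorphB /= tofrac1 -/fX -exprMn mulrN1 opprB //.
Qed.

Lemma hat_X2 : hat 2 'X^2 = 'X^2.
Proof.
apply: tofrac_inj; rewrite hat_frac ?size_polyXn // evKXn evKX /s.
rewrite expr_div_n mulrC -mulrA mulVf ?mulr1 ?expf_neq0 ?fXm1_neq0 //.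
by rewrite rmorphXn.
Qed.

Lemma onemfX_neq0 : 1 - fX != 0.
Proof. by rewrite -opprB oppr_eq0 fXm1_neq0. Qed.

Lemma inv_poly M f : (size f <= (M + M).+1)%N -> hat (M + M) f = f ->
  exists G, f%:F = (1 - fX) ^+ M * evK (ysub F) G.
Proof.
elim: M f => [|M IH] f hs hf.
  exists f; rewrite expr0 mul1r (size1_polyC hs) evKC //.
set c := f`_0.
set f' := f - c *: (1 - 'X) ^+ M.+1.
have HMM : (M.+1 + M.+1 = (M + M).+2)%N by rewrite addSn addnS.
have hf' : hat (M.+1 + M.+1) f' = f' by rewrite hatB hatZ hat_1mX hf.
have hs' : (size f' <= (M + M).+3)%N.
  apply: leq_trans (size_polyD _ _) _; rewrite geq_max size_polyN; apply/andP; split.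
    by apply: (leq_trans hs); lia.
  apply: leq_trans (size_scale_leq _ _) _; apply: leq_trans (size_poly_exp_leq _ _) _.
  have -> : size (1 - 'X : {poly F}) = 2 by rewrite -opprB size_polyN size_Xm1.
  rewrite mul1n; lia.
have h0 : f'`_0 = 0 by rewrite coefB coefZ coef0_1mX mulr1 subrr.
have h1 : f'`_1 = 0.
  apply: opp_self; rewrite -{1}hf' coef_hat_low ?HMM //; last first.
    by case=> // _; rewrite h0.
  by rewrite subn1 /= -signr_odd /= oddD addbb /= expr1 mulrN1.
set f1 := \poly_(i < (M + M).+1) f'`_i.+2.
have hf1s : (size f1 <= (M + M).+1)%N by apply: size_poly.
have Ef : f' = 'X^2 * f1.
  apply/polyP => i; rewrite coefXnM.
  case: ltnP => hi.
    by case: i hi => [|[|]] // _; rewrite ?h0 ?h1.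
  rewrite coef_poly; case: ltnP => hi2.
    by rewrite -addn2 subnK.
  rewrite nth_default //; apply: leq_trans hs' _; lia.
have hinv : hat (M + M) f1 = f1.
  apply: (mulfI (_ : 'X^2 != 0)); first by rewrite monic_neq0 ?monicXn.
  by rewrite -{1}hat_X2 -hatM ?size_polyXn // add2n -HMM -Ef hf'.
have [G1 HG1] := IH f1 hf1s hinv.
exists (c%:P + 'X * G1).
have -> : f = f' + c *: (1 - 'X) ^+ M.+1 by rewrite subrK.
rewrite Ef rmorphD !rmorphM /= HG1 -mul_polyC rmorphM /= -/fX rmorphXn rmorphB /= tofrac1 -/fX.
rewrite evKD evKM evKC evKX /ysub rmorphXn rmorphB /= tofrac1 -/fX.
set u := 1 - fX; set E := evK _ G1.
have e : u * (fX ^+ 2 / u * E) = fX ^+ 2 * E.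
  by rewrite mulrAC mulrC mulfVK // onemfX_neq0.
rewrite mulrDr addrC [_ * (c%:P)%:F]mulrC; congr (_ + _).
rewrite exprSr -[u ^+ M * u * _]mulrA e expr2 !mulrA; congr (_ * _).
by rewrite mulrC mulrA.
Qed.

Definition eqm (K : nat) f g := forall i, (i < K)%N -> f`_i = g`_i.

Lemma eqm_trans K f g h : eqm K f g -> eqm K g h -> eqm K f h.
Proof. by move=> a b i hi; rewrite a ?b. Qed.
Arguments eqm_trans {K f g h}.
Lemma eqm_sym K f g : eqm K f g -> eqm K g f.
Proof. by move=> a i hi; rewrite a. Qed.
Arguments eqm_sym {K f g}.
Lemma eqm_refl K f : eqm K f f.
Proof. by []. Qed.

Lemma eqm_mul K f f' g g' : eqm K f f' -> eqm K g g' -> eqm K (f * g) (f' * g').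
Proof.
move=> a b i hi; rewrite !coefM; apply: eq_bigr => j _.
have hj : (j <= i)%N by rewrite -ltnS.
rewrite a ?b //; first by apply: leq_ltn_trans (leq_subr _ _) hi.
by apply: leq_ltn_trans hj hi.
Qed.

Arguments eqm_mul {K f f' g g'}.
Lemma eqm_sub K f f' g g' : eqm K f f' -> eqm K g g' -> eqm K (f - g) (f' - g').
Proof. by move=> a b i hi; rewrite !coefB a ?b. Qed.

Arguments eqm_sub {K f f' g g'}.
Lemma eqm_eq K f g : (size f <= K)%N -> (size g <= K)%N -> eqm K f g -> f = g.
Proof.
move=> hf hg e; apply/polyP => i; case: (ltnP i K) => hi; first exact: e.
by rewrite !nth_default // (leq_trans _ hi).
Qed.

Lemma eqm_Xm1 K h : eqm K (('X - 1) * h) 0 -> eqm K h 0.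
Proof.
move=> H; elim=> [|i IHi] hi.
  move: (H 0%N hi); rewrite mulrBl mul1r coefB coefXM /= !coef0.
  by move/(congr1 (fun x => - x)); rewrite opprB subr0 oppr0.
move: (H i.+1 hi); rewrite mulrBl mul1r coefB coefXM /= IHi ?(ltnW hi) // !coef0.
by move/(congr1 (fun x => - x)); rewrite opprB subr0 oppr0.
Qed.

Lemma eqm_cancel K L h : eqm K (('X - 1) ^+ L * h) 0 -> eqm K h 0.
Proof.
elim: L h => [|L IH] h; first by rewrite expr0 mul1r.
by rewrite exprS -mulrA => /eqm_Xm1 /IH.
Qed.

Lemma hat_eqm a K f g : eqm K f g -> eqm K (hat a f) (hat a g).
Proof.
move=> e i hi; rewrite /hat !coef_sum; apply: eq_bigr => j _.
rewrite !coefZ !coefXnM; case: ltnP => hj; first by rewrite !mulr0.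
by rewrite e // (leq_ltn_trans hj hi).
Qed.

Definition V (b K : nat) : {poly F} := \poly_(i < K) ((-1) ^+ b * ('C(i + b - 1, i))%:R).

Lemma V0 K : eqm K (V 0 K) 1.
Proof.
move=> i hi; rewrite coef_poly hi coefC expr0 mul1r addn0.
by case: i hi => [|i] //= _; rewrite subn1 /= bin_small.
Qed.

Lemma Vstep b K : eqm K (('X - 1) * V b.+1 K) (V b K).
Proof.
move=> i hi; rewrite mulrBl mul1r coefB coefXM !coef_poly hi.
case: i hi => [|i] hi /=.
  by rewrite !bin0 exprS; ring.
have e1 : (i + b.+1 - 1 = i + b)%N by lia.
have e2 : (i.+1 + b.+1 - 1 = (i + b).+1)%N by lia.
have e3 : (i.+1 + b - 1 = i + b)%N by lia.
rewrite (ltnW hi) e1 e2 e3 binS natrD exprS; ring.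
Qed.

Lemma cXm1 n i : (('X - 1 : {poly F}) ^+ n)`_i = (-1) ^+ (n - i) * ('C(n, i))%:R.
Proof.
elim: n i => [|n IH] i.
  by rewrite expr0 coefC bin0n; case: i => [|i] //=; rewrite mul1r.
rewrite exprSr mulrBr mulr1 coefB coefMX !IH.
case: i => [|i] /=.
  by rewrite !bin0 !subn0 exprS; ring.
rewrite subSS binS natrD.
case: (ltnP i n) => hi.
  have -> : (n - i = (n - i.+1).+1)%N by lia.
  rewrite exprS; ring.
rewrite (bin_small (_ : n < i.+1)%N) ?ltnS //; ring.
Qed.

Lemma coef_V b K i : (i < K)%N -> (V b K)`_i = (-1) ^+ b * ('C(i + b - 1, i))%:R.
Proof. by move=> hi; rewrite coef_poly hi. Qed.

Lemma Vstepn c b K : eqm K (('X - 1) ^+ c * V (b + c) K) (V b K).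
Proof.
elim: c => [|c IH]; first by rewrite expr0 mul1r addn0.
rewrite exprSr -mulrA addnS.
exact: eqm_trans (eqm_mul (eqm_refl _ _) (Vstep _ _)) IH.
Qed.

Lemma Vinv b K : eqm K (('X - 1) ^+ b * V b K) 1.
Proof. by have := Vstepn b 0 K; rewrite add0n => h; exact: eqm_trans h (V0 K). Qed.

Definition gtr (gamma : nat -> F) L : {poly F} := \poly_(i < L.+1) gamma i.

Lemma taylor_eqm P Q gamma L : is_taylor_series P Q gamma -> eqm L.+1 (Q * gtr gamma L) P.
Proof.
move=> T i hi; rewrite coefM -T; apply: eq_bigr => j _; rewrite coef_poly.
by rewrite (leq_ltn_trans (leq_subr _ _) hi).
Qed.

Lemma hat_Xm1n L : hat L (('X - 1) ^+ L) = 1.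
Proof.
apply: tofrac_inj; rewrite hat_frac; last first.
  by apply: leq_trans (size_poly_exp_leq _ _) _; rewrite size_Xm1 mul1n.
rewrite evKXn evKB evKX evK1 sm1 -exprMn mulfV ?fXm1_neq0 // expr1n tofrac1 //.
Qed.

Lemma perj k L j : (j <= L)%N -> ((k + k).+1 <= L)%N ->
  (('X - 1) ^+ k * V L L.+1 * ('X^j * ('X - 1) ^+ (L - j)))`_((k + k).+1) =
  - (('X - 1) ^+ k * 'X^j)`_((k + k).+1).
Proof.
move=> hj hn.
have -> : ('X - 1) ^+ k * V L L.+1 * ('X^j * ('X - 1) ^+ (L - j)) =
   'X^j * (('X - 1) ^+ k * (('X - 1) ^+ (L - j) * V L L.+1)) by ring.
rewrite [('X - 1) ^+ k * 'X^j]mulrC !coefXnM.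
case: ltnP => hjn; first by rewrite oppr0.
set r := ((k + k).+1 - j)%N.
have hr : (r < L.+1)%N by rewrite /r; lia.
have e := Vstepn (L - j) j L.+1; rewrite subnKC // in e.
rewrite (eqm_mul (eqm_refl _ (('X - 1) ^+ k)) e r hr).
case: (leqP k j) => hkj.
  have e2 := Vstepn k (j - k) L.+1; rewrite subnK // in e2.
  rewrite (e2 r hr) coef_V // cXm1.
  have -> : (r + (j - k) - 1 = k)%N by rewrite /r; lia.
  case: (leqP r k) => hrk.
    have -> : (j - k = (k - r).+1)%N by rewrite /r; lia.
    by rewrite exprS; ring.
  by rewrite bin_small //; ring.
have e2 : eqm L.+1 (('X - 1) ^+ k * V j L.+1) (('X - 1) ^+ (k - j)).
  have -> : ('X - 1 : {poly F}) ^+ k = ('X - 1) ^+ (k - j) * ('X - 1) ^+ j.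
    by rewrite -exprD subnK // ltnW.
  rewrite -mulrA; have := eqm_mul (eqm_refl _ (('X - 1) ^+ (k - j))) (Vinv j L.+1).
  by rewrite mulr1.
rewrite (e2 r hr) !cXm1 !(@bin_small _ r); first ring; rewrite /r; lia.
Qed.

Lemma ell_zero gamma k L : symplectic gamma -> ((k + k).+1 <= L)%N ->
  (('X - 1) ^+ k * gtr gamma L)`_((k + k).+1) = 0.
Proof.
move=> S hn; rewrite mulrC coefM.
transitivity (\sum_(j < (k + k).+2)
   gamma j * ((-1) ^+ (k - ((k + k).+1 - j)) * ('C(k, (k + k).+1 - j))%:R)).
  apply: eq_bigr => j _; rewrite cXm1 coef_poly.
  have -> : (j < L.+1)%N by have := ltn_ord j; lia.
  by [].
rewrite -(big_mkord xpredT (fun j => gamma j * ((-1) ^+ (k - ((k + k).+1 - j)) * ('C(k, (k + k).+1 - j))%:R))).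
rewrite (big_cat_nat (n:=k.+1)) //=; last by lia.
rewrite big1_seq ?add0r; last first.
  move=> j /andP[_]; rewrite mem_index_iota => /andP[_ hj].
  rewrite bin_small; first ring; lia.
rewrite -{1}[k.+1]add0n big_addn big_mkord.
have -> : ((k + k).+2 - k.+1 = k.+1)%N by lia.
rewrite -[RHS](S k.+1 (ltn0Sn k)) /=; apply: eq_bigr => i _.
have hi : (i <= k)%N by rewrite -ltnS.
have -> : ((k + k).+1 - (i + k.+1) = k - i)%N by lia.
by rewrite subKn // bin_sub // addnC; ring.
Qed.

Lemma core gamma L : symplectic gamma ->
  eqm L.+1 (hat L (gtr gamma L)) (('X - 1) ^+ L * gtr gamma L).
Proof.
move=> S.
set g := gtr gamma L.
have hg : (size g <= L.+1)%N by apply: size_poly.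
set d := hat L g - ('X - 1) ^+ L * g.
suff H : forall i, (i < L.+1)%N -> d`_i = 0.
  by move=> i hi; apply/eqP; rewrite -subr_eq0 -coefB; apply/eqP; apply: H.
move=> i hi; apply/eqP; apply: contraT => hne.
have ex : exists n, (n < L.+1)%N && (d`_n != 0) by exists i; rewrite hi hne.
case: (ex_minnP ex) => n /andP[hnL hdn] hmin.
have hlow : forall j, (j < n)%N -> d`_j = 0.
  move=> j hj; apply/eqP; apply: contraT => hdj.
  have := hmin j; rewrite (ltn_trans hj hnL) hdj /= => /(_ isT) hle.
  by move: hj; rewrite ltnNge hle.
have hXL : (size (('X - 1 : {poly F}) ^+ L) <= L.+1)%N.
  by apply: leq_trans (size_poly_exp_leq _ _) _; rewrite size_Xm1 mul1n.
have hdd : hat (L + L) d = - d.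
  rewrite hatB hat_ext ?size_hat // hat_invol // hatM // hat_Xm1n mul1r.
  by rewrite opprB.
have hnLL : (n <= L + L)%N by apply: leq_trans (leq_addr _ _); rewrite -ltnS.
have hcoef := coef_hat_low (L + L) d n hnLL hlow.
rewrite hdd coefN in hcoef.
have hodd : odd n.
  apply: contraT => hev.
  move: hcoef; rewrite -signr_odd oddB // addnn odd_double /= (negbTE hev) expr0 mulr1.
  by move/esym/opp_self/eqP; rewrite (negbTE hdn).
set k := n./2.
have hn : n = (k + k).+1.
  by have := odd_double_half n; rewrite hodd -addnn add1n.
set A := ('X - 1) ^+ k * V L L.+1.
have hA0 : A`_0 != 0.
  rewrite coef0M coef0_Xm1 coef_V // add0n bin0 mulr1.
  by rewrite mulf_neq0 // expf_neq0 // oppr_eq0 oner_eq0.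
have hAd : (A * d)`_n = A`_0 * d`_n.
  rewrite coefM big_ord_recl subn0 big1 ?addr0 // => j _.
  rewrite lift0 hlow ?mulr0 //; case: j => jj hjj /=; lia.
have hzero : (A * d)`_n = 0.
  rewrite /d mulrBr coefB.
  have e1 : (A * (('X - 1) ^+ L * g))`_n = (('X - 1) ^+ k * g)`_n.
    have -> : A * (('X - 1) ^+ L * g) =
        (('X - 1) ^+ L * V L L.+1) * (('X - 1) ^+ k * g) by rewrite /A; ring.
    have := eqm_mul (Vinv L L.+1) (eqm_refl _ (('X - 1) ^+ k * g)).
    by rewrite mul1r => h; exact: h n hnL.
  have e2 : (A * hat L g)`_n = - (('X - 1) ^+ k * g)`_n.
    rewrite /hat mulr_sumr coef_sum.
    rewrite {2}/g /gtr poly_def mulr_sumr coef_sum -sumrN.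
    apply: eq_bigr => j _.
    have hjL : (j <= L)%N by rewrite -ltnS.
    rewrite -scalerAr coefZ -scalerAr coefZ coef_poly ltn_ord hn perj -?hn //.
    by rewrite mulrN.
  rewrite e1 e2 hn ell_zero -?hn //; ring.
by move: hAd; rewrite hzero => /esym/eqP; rewrite mulf_eq0 (negbTE hA0) (negbTE hdn).
Qed.

Lemma key (P Q : {poly F}) (gamma : nat -> F) N : (size P <= N.+1)%N -> (size Q <= N.+1)%N ->
  is_taylor_series P Q gamma -> symplectic gamma ->
  P * hat N Q = Q * hat N P.
Proof.
move=> hP hQ T S.
set L := (N + N)%N.
set g := gtr gamma L.
have hg : (size g <= L.+1)%N by apply: size_poly.
have e1 := hat_eqm (N + L) L.+1 _ _ (taylor_eqm P Q gamma L T).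
rewrite (hatM _ _ _ _ hQ hg) (hat_ext _ _ _ hP) in e1.
have e2 := eqm_mul (eqm_refl L.+1 (hat N Q)) (core gamma L S).
have e3 : eqm L.+1 (('X - 1) ^+ L * (hat N Q * g - hat N P)) 0.
  have -> : ('X - 1) ^+ L * (hat N Q * g - hat N P) =
     hat N Q * (('X - 1) ^+ L * g) - ('X - 1) ^+ L * hat N P by ring.
  rewrite -(subrr (('X - 1) ^+ L * hat N P)).
  apply: eqm_sub (eqm_refl _ _).
  exact: eqm_trans (eqm_sym e2) e1.
have e4 := eqm_cancel _ _ _ e3.
have e5 : eqm L.+1 (hat N Q * P - Q * hat N P) 0.
  have e6 := eqm_mul (eqm_refl L.+1 Q) e4; rewrite mulr0 in e6.
  have e7 := eqm_mul (eqm_refl L.+1 (hat N Q)) (taylor_eqm P Q gamma L T).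
  apply: eqm_trans _ e6.
  have -> : Q * (hat N Q * g - hat N P) = hat N Q * (Q * g) - Q * hat N P by ring.
  exact: eqm_sub (eqm_sym e7) (eqm_refl _ _).
have hs : (size (hat N Q * P - Q * hat N P)%R <= L.+1)%N.
  have h1 := size_hat N Q; have h2 := size_hat N P.
  apply: leq_trans (size_polyD _ _) _; rewrite geq_max size_polyN.
  apply/andP; split; apply: leq_trans (size_polyMleq _ _) _; rewrite /L.
    by move: h1 hP; move: (size (hat N Q)) (size P) => x y; lia.
  by move: h2 hQ; move: (size (hat N P)) (size Q) => x y; lia.
have := eqm_eq _ _ _ hs (_ : (size (0 : {poly F})%R <= L.+1)%N) e5.
by rewrite size_poly0 => /(_ isT) /eqP; rewrite subr_eq0 => /eqP h; rewrite mulrC h.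
Qed.

Lemma main_gen (P Q : {poly F}) (gamma : nat -> F) :
  Q.[0] != 0 -> is_taylor_series P Q gamma -> symplectic gamma ->
  exists A B : {poly F}, evK (ysub F) B != 0 /\ P%:F / Q%:F = evK (ysub F) A / evK (ysub F) B.
Proof.
move=> hQ0 T S.
set N := maxn (size P) (size Q).
have hP : (size P <= N.+1)%N by rewrite ltnW // ltnS leq_maxl.
have hQ : (size Q <= N.+1)%N by rewrite ltnW // ltnS leq_maxr.
have E := key P Q gamma N hP hQ T S.
set Qh := hat N Q.
have hQh : Qh != 0.
  apply/eqP => hz; move: hQ0; rewrite horner_coef0.
  have := coef_hat_low N Q 0 (leq0n N) (fun j (hj : (j < 0)%N) => False_ind _ (notF hj)).
  rewrite -/Qh hz coef0 subn0 => /esym/eqP.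
  by rewrite mulf_eq0 expf_eq0 oppr_eq0 oner_eq0 andbF orbF => ->.
have hQnz : Q != 0 by apply: contraNneq hQ0 => ->; rewrite horner0 eqxx.
have hNm : hat (N + N) (P * Qh) = P * Qh.
  by rewrite hatM // ?size_hat // hat_invol // mulrC -E.
have hD : hat (N + N) (Q * Qh) = Q * Qh.
  by rewrite hatM // ?size_hat // hat_invol // mulrC.
have sNm : (size (P * Qh)%R <= (N + N).+1)%N.
  have h1 := size_hat N Q; apply: leq_trans (size_polyMleq _ _) _; rewrite -/Qh in h1.
  by move: h1 hP hQ; move: (size Qh) (size P) (size Q) => x y z; lia.
have sD : (size (Q * Qh)%R <= (N + N).+1)%N.
  have h1 := size_hat N Q; apply: leq_trans (size_polyMleq _ _) _; rewrite -/Qh in h1.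
  by move: h1 hP hQ; move: (size Qh) (size P) (size Q) => x y z; lia.
have [G1 H1] := inv_poly _ _ sNm hNm.
have [G2 H2] := inv_poly _ _ sD hD.
exists G1, G2.
have hDnz : (Q * Qh)%:F != 0 by rewrite tofrac_eq0; exact: mulf_neq0 hQnz hQh.
have hu : (1 - fX) ^+ N != 0 := expf_neq0 N onemfX_neq0.
have hG2 : evK (ysub F) G2 != 0.
  apply: contraNneq hDnz => hz; rewrite H2 hz mulr0; exact: eqxx.
split; first exact: hG2.
have -> : evK (ysub F) G1 / evK (ysub F) G2 = (P * Qh)%:F / (Q * Qh)%:F.
  by rewrite H1 H2 invfM mulrACA (divff hu) mul1r.
have hQhF : Qh%:F != 0 by rewrite tofrac_eq0.
by rewrite !rmorphM /= invfM mulrACA (divff hQhF) mulr1.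
Qed.
End S.

Theorem lemma3p1 (R : realType) (P Q : {poly R[i]}) (gamma : nat -> R[i]) :
  Q.[0] != 0 ->
  is_taylor_series P Q gamma ->
  symplectic gamma ->
  exists A B : {poly R[i]},
    eval_at_y B != 0 /\
    P%:F / Q%:F = eval_at_y A / eval_at_y B.
Proof.
move=> h T S; exact: main_gen _ _ _ _ h T S.
Qed.
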